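(* Let $f$ be a measurable map preserving a probability measure $\mu$. Let $(U_n)$ and $(V_n)$ be two nested sequences of measurable sets ($U_{n+1}\subset U_n$, $V_{n+1}\subset V_n$) with $V_n\subset U_n$ and $\mu(V_n)>0$ for each $n$, and such that $\mu(U_n\setminus V_n)/\mu(U_n)\to0$ as $n\to\infty$. For $*\in\{U,V\}$ and $\ell\ge1$ put $$\hat\alpha^*_\ell=\lim_{K\to\infty}\lim_{n\to\infty}\mu_{*_n}\big(\tau^{\ell-1}_{*_n}\le K\big).$$ Then $\hat\alpha^U_\ell=\hat\alpha^V_\ell$ for every $\ell\ge1$ (i.e., for each $\ell$ the limits defining $\hat\alpha^U_\ell$ exist if and only if those defining $\hat\alpha^V_\ell$ exist, and then they coincide).
   Context: $\tau_W(x)=\min\{j\ge1:f^jx\in W\}$, $\tau^0_W=0$, $\tau^j_W=\tau^{j-1}_W+\tau_W\circ f^{\tau^{j-1}_W}$; $\mu_W(A)=\mu(A\cap W)/\mu(W)$. *)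

(* Defs.v *)
From HB Require Import structures.
From mathcomp Require Import all_boot all_order all_algebra.
From mathcomp Require Import all_classical all_reals all_analysis.
Set Implicit Arguments. Unset Strict Implicit. Unset Printing Implicit Defensive.
Import Order.TTheory GRing.Theory Num.Theory.
Import numFieldNormedType.Exports.
Local Open Scope classical_set_scope.
Local Open Scope ring_scope.

Section Defs.
Context {T : Type}.

(* tau_W(x) = min{ j >= 1 : f^j x \in W }, None when the set is empty (= +oo). *)
Definition tau (f : T -> T) (W : set T) (x : T) : option nat :=
  match pselect (exists j, (0 < j)%N && `[< W (iter j f x) >]) with
  | left h => Some (ex_minn h)
  | right _ => None
  end.

Fixpoint tau_iter (f : T -> T) (W : set T) (j : nat) (x : T) : option nat :=
  match j with
  | 0%N => Some 0%N
  | j'.+1 => match tau_iter f W j' x with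
             | Some t => match tau f W (iter t f x) with
                         | Some s => Some (t + s)%N
                         | None => None
                         end
             | None => None
             end
  end.

Definition tau_iter_le (f : T -> T) (W : set T) (j K : nat) : set T :=
  [set x | exists t, tau_iter f W j x = Some t /\ (t <= K)%N].
End Defs.

Definition condmeas {d} {T : measurableType d} {R : realType}
  (mu : probability T R) (W A : set T) : R :=
  fine (mu (A `&` W)) / fine (mu W).

Definition alpha_hat_is {d} {T : measurableType d} {R : realType}
  (mu : probability T R) (f : T -> T) (W : nat -> set T) (l : nat) (a : R) : Prop :=
  exists g : nat -> R,
    (forall K : nat,
       (fun n => condmeas mu (W n) (tau_iter_le f (W n) l.-1 K)) @ \oo --> g K)
    /\ g @ \oo --> a.

(* Main.v *)
Require Import Defs.
From HB Require Import structures.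
From mathcomp Require Import all_boot all_order all_algebra.
From mathcomp Require Import all_classical all_reals all_analysis.
From mathcomp Require Import ring lra.
Import Order.TTheory GRing.Theory Num.Theory.
Import numFieldNormedType.Exports.
Local Open Scope classical_set_scope.
Local Open Scope ring_scope.

Lemma tauP {T : Type} (f : T -> T) (W : set T) y s :
  tau f W y = Some s <->
  [/\ (0 < s)%N, W (iter s f y) &
      forall i, (0 < i)%N -> (i < s)%N -> ~ W (iter i f y)].
Proof.
rewrite /tau; case: pselect => [h|h].
- case: ex_minnP => m /andP[m0 /asboolP Wm] mmin; split.
  + case=> <-; split => // i i0 lt Wi.
    have := mmin i; rewrite i0 /= => /(_ (asboolT Wi)).
    by rewrite leqNgt lt.
  + case=> s0 Ws smin; congr Some; apply/eqP; rewrite eqn_leq.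
    rewrite mmin ?s0 /=; last exact/asboolP.
    rewrite leqNgt; apply/negP => lt; exact: smin m m0 lt Wm.
- split => // -[s0 Ws _]; exfalso; apply: h; exists s; rewrite s0 /=.
  exact/asboolP.
Qed.

Lemma couple {T : Type} (f : T -> T) (U V : set T) K x :
  (forall i, (0 < i)%N -> (i <= K)%N -> (U (iter i f x) <-> V (iter i f x))) ->
  forall j t, (t <= K)%N -> tau_iter f U j x = Some t ->
  tau_iter f V j x = Some t.
Proof.
move=> H; elim=> [|j IH] t tK //=.
case E1: (tau_iter f U j x) => [t0|] //.
case E2: (tau f U (iter t0 f x)) => [s|] // [ts].
have t0K : (t0 <= K)%N by rewrite -ts in tK; exact: leq_trans (leq_addr _ _) tK.
rewrite (IH _ t0K E1).
move/tauP: E2 => [s0 Ws smin].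
have -> : tau f V (iter t0 f x) = Some s.
  apply/tauP; split => //.
  - rewrite -iterD; apply/(H (s + t0)); [by rewrite addn_gt0 s0|
      by rewrite -ts addnC in tK| by rewrite iterD].
  - move=> i i0 isl; rewrite -iterD -H.
    + by rewrite iterD; exact: smin.
    + by rewrite addn_gt0 i0.
    + rewrite -ts addnC in tK; apply: leq_trans tK.
      by rewrite leq_add2r ltnW.
by rewrite ts.
Qed.

Lemma mpre d (T : measurableType d) (f : T -> T) :
  measurable_fun setT f ->
  forall n (A : set T), measurable A -> measurable ((iter n f) @^-1` A).
Proof.
move=> fm; elim=> [|n IH] A mA; first exact: mA.
have -> : (iter n.+1 f) @^-1` A = (iter n f) @^-1` (f @^-1` A) by [].
apply: IH; rewrite -[f @^-1` A]setTI; exact: (fm measurableT A mA).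
Qed.

Lemma tau_meas d (T : measurableType d) (f : T -> T) (W : set T) s :
  measurable_fun setT f -> measurable W ->
  measurable [set x | tau f W x = Some s].
Proof.
move=> fm mW.
have -> : [set x | tau f W x = Some s] =
  (if (0 < s)%N then (iter s f) @^-1` W `&`
     \bigcap_i (if (0 < i)%N && (i < s)%N then (iter i f) @^-1` (~` W) else setT)
   else set0).
  apply/seteqP; split => x /=.
  - move/tauP => [s0 Ws smin]; rewrite s0; split => // i _ /=.
    case: ifP => // /andP[i0 iS]; exact: smin.
  - case: ifP => s0 // [Ws Hi]; apply/tauP; split => // i i0 iS.
    by have := Hi i I; rewrite i0 iS.
case: ifP => _; last exact: measurable0.
apply: measurableI; first exact: mpre.
apply: bigcapT_measurable => i; case: ifP => _; last exact: measurableT.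
apply: mpre => //; exact: measurableC.
Qed.

Lemma tau_iter_meas d (T : measurableType d) (f : T -> T) (W : set T) :
  measurable_fun setT f -> measurable W ->
  forall j t, measurable [set x | tau_iter f W j x = Some t].
Proof.
move=> fm mW; elim=> [|j IH] t.
  case: t => [|t].
    rewrite (_ : [set x | _] = setT); first exact: measurableT.
    by apply/seteqP; split.
  rewrite (_ : [set x | _] = set0); first exact: measurable0.
  by apply/seteqP; split.
have -> : [set x | tau_iter f W j.+1 x = Some t] =
  \bigcup_t0 \bigcup_s (if (t0 + s == t)%N then
     [set x | tau_iter f W j x = Some t0] `&`
     (iter t0 f) @^-1` [set y | tau f W y = Some s] else set0).
  apply/seteqP; split => x /=.
  - case E1: (tau_iter f W j x) => [t0|] //.
    case E2: (tau f W (iter t0 f x)) => [s|] // [ts].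
    exists t0 => //; exists s => //; rewrite ts eqxx; split => //.
  - case=> t0 _ [s _]; case: eqP => // ts [/= E1 E2].
    by rewrite E1 /= E2 ts.
apply: bigcupT_measurable => t0; apply: bigcupT_measurable => s.
case: ifP => _; last exact: measurable0.
apply: measurableI; first exact: IH.
apply: mpre => //; exact: tau_meas.
Qed.

Lemma tau_iter_le_meas d (T : measurableType d) (f : T -> T) (W : set T) j K :
  measurable_fun setT f -> measurable W ->
  measurable (tau_iter_le f W j K).
Proof.
move=> fm mW.
have -> : tau_iter_le f W j K =
  \bigcup_t (if (t <= K)%N then [set x | tau_iter f W j x = Some t] else set0).
  apply/seteqP; split => x /=.
  - by case=> t [E tK]; exists t => //; rewrite tK.
  - by case=> t _; case: ifP => // tK E; exists t.
apply: bigcupT_measurable => t; case: ifP => _; last exact: measurable0.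
exact: tau_iter_meas.
Qed.

Fixpoint Eset {T : Type} (f : T -> T) (D : set T) (k : nat) : set T :=
  match k with
  | 0%N => set0
  | k'.+1 => Eset f D k' `|` (iter k'.+1 f) @^-1` D
  end.

Lemma EsetP {T : Type} (f : T -> T) (D : set T) k x :
  ~ Eset f D k x -> forall i, (0 < i)%N -> (i <= k)%N -> ~ D (iter i f x).
Proof.
elim: k => [|k IH] nE i i0 ik; first by case: i i0 ik.
rewrite leq_eqVlt in ik; case/orP: ik => [/eqP ->|ik].
  by move=> Di; apply: nE; right.
by apply: IH => // Ek; apply: nE; left.
Qed.

Lemma Eset_meas d (T : measurableType d) (f : T -> T) (D : set T) k :
  measurable_fun setT f -> measurable D -> measurable (Eset f D k).
Proof.
move=> fm mD; elim: k => [|k IH] /=; first exact: measurable0.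
apply: measurableU => //; exact: mpre.
Qed.

Section MeasFacts.
Context d (T : measurableType d) (R : realType) (mu : probability T R).

Lemma mle (A B : set T) : measurable A -> measurable B -> A `<=` B ->
  fine (mu A) <= fine (mu B).
Proof.
move=> mA mB AB; apply: fine_le; try exact: fin_num_measure.
exact: le_measure (mem_set mA) (mem_set mB) AB.
Qed.

Lemma mU2 (A B : set T) : measurable A -> measurable B ->
  fine (mu (A `|` B)) <= fine (mu A) + fine (mu B).
Proof.
move=> mA mB; rewrite -fineD; try exact: fin_num_measure.
apply: fine_le.
- apply: fin_num_measure; exact: measurableU.
- by rewrite fin_numD !fin_num_measure.
- exact: measureU2.
Qed.

Lemma mDI (U V : set T) : measurable U -> measurable V -> V `<=` U ->
  fine (mu U) = fine (mu V) + fine (mu (U `\` V)).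
Proof.
move=> mU mV VU; rewrite (measureDI mu mU mV) setIidr // fineD; first by rewrite addrC.
  apply: fin_num_measure; exact: measurableD.
exact: fin_num_measure.
Qed.

Lemma m0 (A : set T) : 0 <= fine (mu A).
Proof. exact: fine_ge0 (measure_ge0 _ _). Qed.

Lemma minv (f : T -> T) :
  measurable_fun setT f ->
  (forall A : set T, measurable A -> mu (f @^-1` A) = mu A) ->
  forall i (A : set T), measurable A -> mu ((iter i f) @^-1` A) = mu A.
Proof.
move=> fm fp; elim=> [|i IH] A mA //.
have -> : (iter i.+1 f) @^-1` A = (iter i f) @^-1` (f @^-1` A) by [].
rewrite IH ?fp //; rewrite -[f @^-1` A]setTI; exact: (fm measurableT A mA).
Qed.

Lemma Ebound (f : T -> T) (D : set T) :
  measurable_fun setT f ->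
  (forall A : set T, measurable A -> mu (f @^-1` A) = mu A) ->
  measurable D ->
  forall k, fine (mu (Eset f D k)) <= k%:R * fine (mu D).
Proof.
move=> fm fp mD; elim=> [|k IH] /=; first by rewrite measure0 mul0r.
have H1 := mU2 _ _ (Eset_meas _ _ _ _ k fm mD) (mpre _ _ _ fm k.+1 _ mD).
rewrite minv // in H1.
rewrite -natr1 mulrDl mul1r; lra.
Qed.

End MeasFacts.

Lemma key_ineq (R : realFieldType) (p q u v dl e k : R) :
  0 < v -> u = v + dl -> 0 <= dl -> 0 <= q -> q <= v -> e <= k * dl ->
  p - q <= dl + e -> q - p <= e -> 0 <= k ->
  `|p / u - q / v| <= (k + 2) * (dl / u).
Proof.
move=> v0 uE dl0 q0 qv ek pq qp k0.
have u0 : 0 < u by lra.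
have -> : p / u - q / v = (p - q) * u^-1 - (q / v) * (dl / u).
  rewrite uE; field; apply/andP; split; rewrite ?gt_eqF //; lra.
set w := u^-1; have w0 : 0 < w by rewrite invr_gt0.
set Y := q / v.
have Y0 : 0 <= Y by rewrite divr_ge0 // ltW.
have Y1 : Y <= 1 by rewrite ler_pdivrMr // mul1r.
have kd : 0 <= k * dl by rewrite mulr_ge0.
have Z0 : 0 <= dl * w by rewrite mulr_ge0 // ltW.
have h1 : (p - q) * w <= (dl + e) * w by rewrite ler_wpM2r // ltW.
have h2 : (q - p) * w <= e * w by rewrite ler_wpM2r // ltW.
have h3 : e * w <= (k * dl) * w by rewrite ler_wpM2r // ltW.
have h4 : Y * (dl * w) <= 1 * (dl * w) by rewrite ler_wpM2r.
have h5 : 0 <= Y * (dl * w) by rewrite mulr_ge0.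
rewrite ler_norml; apply/andP; split; lra.
Qed.

Lemma diff0 (R : realType) (a b eps : nat -> R) (C : R) :
  0 <= C -> (forall n, `|a n - b n| <= C * eps n) -> eps @ \oo --> 0 ->
  (a - b) @ \oo --> 0.
Proof.
move=> C0 H e0; apply/cvgr0Pnorm_lt => e epos.
have C1 : 0 < C + 1 by lra.
near=> n.
have Hn : `|eps n| < e / (C + 1).
  near: n; exact: (cvgr0_norm_lt _ e0 _ (divr_gt0 epos C1)).
rewrite /=.
have Hb := H n.
have en : eps n <= `|eps n| := ler_norm _.
rewrite ltr_pdivlMr // in Hn.
have : C * eps n <= C * `|eps n| by rewrite ler_wpM2l.
have : 0 <= `|eps n| by [].
move: Hb; set x := `|_ - _|; move=> Hb *; nra.
Unshelve. all: by end_near.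
Qed.
Theorem lemma5p5 (d : measure_display) (T : measurableType d) (R : realType)
  (mu : probability T R) (f : T -> T)
  (f_meas : measurable_fun setT f)
  (f_pres : forall A : set T, measurable A -> mu (f @^-1` A) = mu A)
  (U V : nat -> set T)
  (U_meas : forall n, measurable (U n)) (V_meas : forall n, measurable (V n))
  (U_nest : forall n, U n.+1 `<=` U n) (V_nest : forall n, V n.+1 `<=` V n)
  (VU : forall n, V n `<=` U n)
  (V_pos : forall n, (0 < mu (V n))%E)
  (small : (fun n => fine (mu (U n `\` V n)) / fine (mu (U n))) @ \oo --> 0) :
  forall (l : nat), (1 <= l)%N ->
  forall a : R, alpha_hat_is mu f U l a <-> alpha_hat_is mu f V l a.
Proof.
move=> l _ a.
have key : forall K n,
  `|condmeas mu (U n) (tau_iter_le f (U n) l.-1 K) -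
    condmeas mu (V n) (tau_iter_le f (V n) l.-1 K)| <=
  (K%:R + 2) * (fine (mu (U n `\` V n)) / fine (mu (U n))).
  move=> K n.
  set AU := tau_iter_le f (U n) l.-1 K.
  set AV := tau_iter_le f (V n) l.-1 K.
  set D := U n `\` V n.
  set E := Eset f D K.
  have mU := U_meas n; have mV := V_meas n.
  have mAU : measurable AU := tau_iter_le_meas _ _ f (U n) l.-1 K f_meas mU.
  have mAV : measurable AV := tau_iter_le_meas _ _ f (V n) l.-1 K f_meas mV.
  have mD : measurable D := measurableD mU mV.
  have mE : measurable E := Eset_meas _ _ f D K f_meas mD.
  have sub1 : AU `<=` AV `|` E.
    move=> x AUx; case: (pselect (E x)) => Ex; [by right|left].
    move: AUx => [t [Et tK]]; exists t; split => //.
    apply: (couple f (U n) (V n) K x _ l.-1 t tK Et) => i i0 iK.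
    have nD := EsetP f D K x Ex i i0 iK.
    split => [Ui|/VU //].
    by case: (pselect (V n (iter i f x))) => // nV; exfalso; apply: nD; split.
  have sub2 : AV `<=` AU `|` E.
    move=> x AVx; case: (pselect (E x)) => Ex; [by right|left].
    move: AVx => [t [Et tK]]; exists t; split => //.
    apply: (couple f (V n) (U n) K x _ l.-1 t tK Et) => i i0 iK.
    have nD := EsetP f D K x Ex i i0 iK.
    split => [/VU //|Ui].
    by case: (pselect (V n (iter i f x))) => // nV; exfalso; apply: nD; split.
  have mAUU := measurableI _ _ mAU mU.
  have mAUV := measurableI _ _ mAU mV.
  have mAVV := measurableI _ _ mAV mV.
  have i1 : fine (mu (AU `&` U n)) <= fine (mu (AU `&` V n)) + fine (mu D).
    have S : AU `&` U n `<=` (AU `&` V n) `|` D.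
      move=> x [Ax Ux]; case: (pselect (V n x)) => Vx; [by left|by right].
    have := mle _ _ _ mu _ _ mAUU (measurableU _ _ mAUV mD) S.
    have := mU2 _ _ _ mu _ _ mAUV mD; lra.
  have i2 : fine (mu (AU `&` V n)) <= fine (mu (AV `&` V n)) + fine (mu E).
    have S : AU `&` V n `<=` (AV `&` V n) `|` E.
      move=> x [Ax Vx]; case: (sub1 x Ax) => [AVx|Ex]; [by left|by right].
    have := mle _ _ _ mu _ _ mAUV (measurableU _ _ mAVV mE) S.
    have := mU2 _ _ _ mu _ _ mAVV mE; lra.
  have i3 : fine (mu (AV `&` V n)) <= fine (mu (AU `&` V n)) + fine (mu E).
    have S : AV `&` V n `<=` (AU `&` V n) `|` E.
      move=> x [Ax Vx]; case: (sub2 x Ax) => [AUx|Ex]; [by left|by right].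
    have := mle _ _ _ mu _ _ mAVV (measurableU _ _ mAUV mE) S.
    have := mU2 _ _ _ mu _ _ mAUV mE; lra.
  have i4 : fine (mu (AU `&` V n)) <= fine (mu (AU `&` U n)).
    apply: mle => //; move=> x [Ax Vx]; split => //; exact: VU.
  have eU := mDI _ _ _ mu _ _ mU mV (VU n).
  have qv : fine (mu (AV `&` V n)) <= fine (mu (V n)).
    by apply: mle => //; exact: subIsetr.
  have v0 : 0 < fine (mu (V n)).
    by rewrite -lte_fin fineK ?fin_num_measure.
  have eb := Ebound _ _ _ mu f D f_meas f_pres mD K.
  have dl0 := m0 _ _ _ mu D.
  have q0 := m0 _ _ _ mu (AV `&` V n).
  rewrite /condmeas.
  apply: (@key_ineq _ _ _ _ (fine (mu (V n))) (fine (mu D)) (fine (mu E)) K%:R) => //.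
  - lra.
  - lra.
split => -[g [Hg Hga]]; exists g; split => // K.
- apply: cvg_sub0 (Hg K); apply: (diff0 _ _ _ _ (K%:R + 2) _ _ small).
    by rewrite addr_ge0.
  by move=> n; rewrite distrC; exact: key.
- apply: cvg_sub0 (Hg K); apply: (diff0 _ _ _ _ (K%:R + 2) _ _ small).
    by rewrite addr_ge0.
  exact: key.
Qed.
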